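(* Let $\Sigma$ be a finite alphabet with at least two symbols. Define $\delta:\Sigma^{\mathbb{N}}\times\Sigma^{\mathbb{N}}\to\mathbb{R}$ by $\delta(x,x)=0$ and, for $x\neq y$, $\delta(x,y)=2^{-n}$ where $n$ is the minimal number of states of a Büchi automaton that separates $x$ and $y$. Then: (1) $\delta$ is a distance on $\Sigma^{\mathbb{N}}$; (2) $\delta$ is compatible with the Büchi topology $\tau_B$; (3) $\delta$ is not complete.
   Context: A Büchi automaton is $\mathcal{A}=(\Sigma,Q,Q_i,Q_f,\delta)$ with finite state set $Q$, initial states $Q_i$, final states $Q_f$, transitions $\subseteq Q\times\Sigma\times Q$; a run on $\sigma\in\Sigma^{\mathbb{N}}$ is $(q_n)_n$ with $q_0\in Q_i$ and each $(q_n,\sigma(n),q_{n+1})$ a transition; it is accepting if it visits $Q_f$ infinitely often; $L(\mathcal{A})$ is the set of words with an accepting run; $|\mathcal{A}|=|Q|$. A language is $\omega$-regular if it equals some $L(\mathcal{A})$. $\mathcal{A}$ separates $x$ and $y$ if exactly one of $x,y$ lies in $L(\mathcal{A})$. $\tau_B$ is the topology on $\Sigma^{\mathbb{N}}$ generated by the $\omega$-regular languages. *)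

(* Defs.v *)
From Stdlib Require Import Reals Lra List Classical ClassicalEpsilon.
Open Scope R_scope.
Set Implicit Arguments.

Definition word (Sg : Type) := nat -> Sg.

(** A Büchi automaton with state set Q = {0, ..., nst-1}; |A| = nst.
    Initial states, final states and transitions are given as predicates;
    only their restriction to Q matters (runs stay inside Q). *)
Record buchi (Sg : Type) := Buchi {
  nst : nat;
  binit : nat -> Prop;
  bfinal : nat -> Prop;
  btrans : nat -> Sg -> nat -> Prop
}.

Definition is_run (Sg : Type) (A : buchi Sg) (w : word Sg) (r : nat -> nat) : Prop :=
  binit A (r 0%nat) /\
  forall k : nat, (r k < nst A)%nat /\ btrans A (r k) (w k) (r (Datatypes.S k)).

Definition is_accepting (Sg : Type) (A : buchi Sg) (r : nat -> nat) : Prop :=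
  forall N : nat, exists k : nat, (N <= k)%nat /\ bfinal A (r k).

Definition accepts (Sg : Type) (A : buchi Sg) (w : word Sg) : Prop :=
  exists r, is_run A w r /\ is_accepting A r.

Definition omega_regular (Sg : Type) (L : word Sg -> Prop) : Prop :=
  exists A : buchi Sg, forall w, L w <-> accepts A w.

Definition separates (Sg : Type) (A : buchi Sg) (x y : word Sg) : Prop :=
  ~ (accepts A x <-> accepts A y).

Definition is_min_sep (Sg : Type) (x y : word Sg) (n : nat) : Prop :=
  (exists A : buchi Sg, nst A = n /\ separates A x y) /\
  (forall A : buchi Sg, separates A x y -> (n <= nst A)%nat).

Definition delta (Sg : Type) (x y : word Sg) : R :=
  if excluded_middle_informative (x = y) then 0
  else / 2 ^ (epsilon (inhabits 0%nat) (is_min_sep x y)).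

Definition is_distance (X : Type) (d : X -> X -> R) : Prop :=
  (forall x y, 0 <= d x y) /\
  (forall x y, d x y = 0 <-> x = y) /\
  (forall x y, d x y = d y x) /\
  (forall x y z, d x z <= d x y + d y z).

Definition metric_open (X : Type) (d : X -> X -> R) (U : X -> Prop) : Prop :=
  forall x, U x -> exists eps, 0 < eps /\ forall y, d x y < eps -> U y.

(** Open sets of tau_B, the topology generated by the omega-regular languages
    (arbitrary unions of finite intersections of omega-regular languages). *)
Definition buchi_open (Sg : Type) (U : word Sg -> Prop) : Prop :=
  forall x, U x ->
    exists Ls : list (word Sg -> Prop),
      (forall L, In L Ls -> omega_regular L /\ L x) /\
      (forall y, (forall L, In L Ls -> L y) -> U y).

Definition cauchy (X : Type) (d : X -> X -> R) (u : nat -> X) : Prop :=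
  forall eps, 0 < eps -> exists N : nat, forall m n : nat,
    (N <= m)%nat -> (N <= n)%nat -> d (u m) (u n) < eps.

Definition converges (X : Type) (d : X -> X -> R) (u : nat -> X) : Prop :=
  exists l : X, forall eps, 0 < eps -> exists N : nat, forall n : nat,
    (N <= n)%nat -> d (u n) l < eps.

Definition complete (X : Type) (d : X -> X -> R) : Prop :=
  forall u : nat -> X, cauchy d u -> converges d u.

(* Main.v *)
Require Import Defs.
From Stdlib Require Import Reals List Lra Lia Arith Factorial.
From Stdlib Require Import Classical ClassicalEpsilon FunctionalExtensionality PropExtensionality ProofIrrelevance.
Import ListNotations.
Open Scope nat_scope.


Definition Fin (X : Type) := exists l : list X, forall x, In x l.

Lemma Fin_fun (A B : Type) : Fin A -> Fin B -> Fin (A -> B).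
Proof.
  intros [lA HA] [lB HB].
  assert (H : forall l : list A, exists L : list (A -> B), forall f, exists g,
      In g L /\ forall a, In a l -> g a = f a).
  { induction l as [|a0 l IH].
    - destruct (classic (inhabited (A -> B))) as [[f0]|Hn].
      + exists [f0]. intros f. exists f0. split; [left; reflexivity|]. intros a [].
      + exists []. intros f. exfalso. apply Hn. constructor. exact f.
    - destruct IH as [L HL].
      exists (flat_map (fun g => map (fun b => fun x =>
         if excluded_middle_informative (x = a0) then b else g x) lB) L).
      intros f. destruct (HL f) as [g [Hg Hag]].
      exists (fun x => if excluded_middle_informative (x = a0) then f a0 else g x).
      split.
      + apply in_flat_map. exists g. split; [exact Hg|].
        apply in_map_iff. exists (f a0). split; [reflexivity|apply HB].
      + intros a Ha. destruct (excluded_middle_informative (a = a0)) as [->|Hne].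
        * reflexivity.
        * destruct Ha as [Ha|Ha]; [congruence|]. apply Hag; exact Ha. }
  destruct (H lA) as [L HL]. exists L. intros f.
  destruct (HL f) as [g [Hg Hag]].
  replace f with g; [exact Hg|]. apply functional_extensionality. intros a. apply Hag, HA.
Qed.

Lemma Fin_prod (A B : Type) : Fin A -> Fin B -> Fin (A * B).
Proof.
  intros [lA HA] [lB HB]. exists (list_prod lA lB). intros [x y]. apply in_prod; auto.
Qed.

Lemma Fin_option (A : Type) : Fin A -> Fin (option A).
Proof.
  intros [l H]. exists (None :: map Some l). intros [x|]; [right; apply in_map, H|left; reflexivity].
Qed.

Lemma Fin_bool : Fin bool.
Proof. exists [true; false]. intros []; simpl; auto. Qed.

Lemma Fin_Prop : Fin Prop.
Proof.
  exists [True; False]. intros P. destruct (classic P) as [HP|HP].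
  - left. apply propositional_extensionality. tauto.
  - right. left. apply propositional_extensionality. tauto. Qed.

Definition fN (N : nat) := {p : nat | p < N}.

Lemma Fin_fN (N : nat) : Fin (fN N).
Proof.
  induction N as [|N [l Hl]].
  - exists []. intros [p Hp]. lia.
  - exists (exist _ N (Nat.lt_succ_diag_r N) ::
        map (fun x : fN N => exist (fun p => p < S N) (proj1_sig x) (Nat.lt_lt_succ_r _ _ (proj2_sig x))) l).
    intros [p Hp]. destruct (Nat.eq_dec p N) as [->|Hne].
    + left. f_equal. apply proof_irrelevance.
    + right. assert (Hp' : p < N) by lia. apply in_map_iff.
      exists (exist _ p Hp'). split; [|apply Hl]. simpl. f_equal. apply proof_irrelevance.
Qed.

Lemma Fin_enc (X : Type) : Fin X -> exists K (enc : X -> nat),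
  (forall x, enc x < K)%nat /\ (forall x y, enc x = enc y -> x = y).
Proof.
  intros [l Hl].
  assert (H : exists enc : X -> nat, (forall x, In x l -> enc x < length l)%nat /\
     (forall x y, In x l -> In y l -> enc x = enc y -> x = y)).
  { clear Hl. induction l as [|a l IH].
    - exists (fun _ => 0%nat). split; intros; contradiction.
    - destruct IH as [enc [H1 H2]].
      exists (fun x => if excluded_middle_informative (x = a) then 0%nat else S (enc x)).
      split.
      + intros x Hx. simpl. destruct (excluded_middle_informative (x = a)); [lia|].
        destruct Hx as [Hx|Hx]; [congruence|]. specialize (H1 x Hx). lia.
      + intros x y Hx Hy. destruct (excluded_middle_informative (x = a)) as [ea|na];
        destruct (excluded_middle_informative (y = a)) as [eb|nb]; try congruence.
        intros E. injection E. apply H2.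
        * destruct Hx; [congruence|assumption].
        * destruct Hy; [congruence|assumption]. }
  destruct H as [enc [H1 H2]]. exists (length l), enc. split; auto.
Qed.

Definition inf (P : nat -> Prop) := forall n, exists m, (n <= m)%nat /\ P m.

Lemma least (Q : nat -> Prop) n : Q n -> exists k, Q k /\ forall m, Q m -> (k <= m)%nat.
Proof.
  revert Q. induction n as [n IH] using lt_wf_ind. intros Q Hn.
  destruct (classic (exists m, (m < n)%nat /\ Q m)) as [[m [Hm Qm]]|Hno].
  - exact (IH m Hm Q Qm).
  - exists n. split; [exact Hn|]. intros m Qm. destruct (le_lt_dec n m); [assumption|].
    exfalso. apply Hno. eauto.
Qed.

Lemma enum (P : nat -> Prop) : inf P -> exists f : nat -> nat,
  P (f 0%nat) /\ (forall m, P m -> (f 0%nat <= m)%nat) /\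
  forall t, (f t < f (S t))%nat /\ P (f (S t)) /\ forall m, (f t < m)%nat -> (m < f (S t))%nat -> ~ P m.
Proof.
  intros HP.
  set (nxt := fun n => epsilon (inhabits 0%nat) (fun k => ((n < k)%nat /\ P k) /\ forall m, ((n < m)%nat /\ P m) -> (k <= m)%nat)).
  assert (Hnxt : forall n, ((n < nxt n)%nat /\ P (nxt n)) /\ forall m, ((n < m)%nat /\ P m) -> (nxt n <= m)%nat).
  { intros n. unfold nxt. apply epsilon_spec.
    destruct (HP (S n)) as [m [Hm Pm]]. apply (least (fun k => (n < k)%nat /\ P k) m). split; [lia|auto]. }
  destruct (HP 0%nat) as [m0 [_ P0]]. destruct (least P m0 P0) as [k0 [Pk0 Hk0]].
  exists (fix f t := match t with 0%nat => k0 | S t => nxt (f t) end).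
  split; [exact Pk0|]. split; [exact Hk0|].
  intros t. simpl. destruct (Hnxt ((fix f t := match t with 0%nat => k0 | S t => nxt (f t) end) t)) as [[H1 H2] H3].
  split; [exact H1|]. split; [exact H2|]. intros m Hm1 Hm2 Pm. specialize (H3 m (conj Hm1 Pm)). lia.
Qed.

Lemma enum_all (P : nat -> Prop) (f : nat -> nat) :
  P (f 0%nat) -> (forall m, P m -> (f 0%nat <= m)%nat) ->
  (forall t, (f t < f (S t))%nat /\ P (f (S t)) /\ forall m, (f t < m)%nat -> (m < f (S t))%nat -> ~ P m) ->
  forall m, P m -> exists t, f t = m.
Proof.
  intros H0 Hmin Hs.
  assert (Hseg : forall m, (f 0%nat <= m)%nat -> exists t, (f t <= m)%nat /\ (m < f (S t))%nat).
  { induction m as [|m IH]; intros Hm.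
    - exists 0%nat. destruct (Hs 0%nat) as [h _]. lia.
    - destruct (le_lt_dec (f 0%nat) m) as [Hle|Hlt].
      + destruct (IH Hle) as [t [Ht1 Ht2]].
        destruct (le_lt_dec (f (S t)) (S m)) as [Hl|Hl].
        * exists (S t). destruct (Hs (S t)) as [h _]. lia.
        * exists t. lia.
      + exists 0%nat. destruct (Hs 0%nat) as [h _]. lia. }
  intros m Pm. destruct (Hseg m (Hmin m Pm)) as [t [Ht1 Ht2]].
  exists t. destruct (Nat.eq_dec (f t) m) as [e|ne]; [exact e|].
  exfalso. destruct (Hs t) as [_ [_ Hg]]. apply (Hg m); [lia|lia|exact Pm].
Qed.

Lemma iph (K : Type) (P : nat -> Prop) (g : nat -> K) : Fin K -> inf P ->
  exists k, inf (fun m => P m /\ g m = k).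
Proof.
  intros [l Hl] HP. apply NNPP. intros Hno.
  assert (Hb : forall l' : list K, exists B, forall m, (B <= m)%nat -> P m -> ~ In (g m) l').
  { induction l' as [|k l' [B HB]].
    - exists 0%nat. intros m _ _ [].
    - assert (Hk : ~ inf (fun m => P m /\ g m = k)) by (intro; apply Hno; eauto).
      unfold inf in Hk. apply not_all_ex_not in Hk. destruct Hk as [B' HB'].
      exists (Nat.max B B'). intros m Hm Pm [Hin|Hin].
      + apply HB'. exists m. split; [lia|auto].
      + apply (HB m); [lia|auto|auto]. }
  destruct (Hb l) as [B HB]. destruct (HP B) as [m [Hm Pm]]. apply (HB m Hm Pm), Hl.
Qed.

Lemma ramsey (K : Type) (col : nat -> nat -> K) : Fin K ->
  exists h : nat -> nat, (forall t, h t < h (S t)) /\ exists k, forall t, col (h t) (h (S t)) = k.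
Proof.
  intros HK.
  set (stepP := fun (S0 : nat -> Prop) (tr : (nat * K * (nat -> Prop))%type) =>
     let '(a, k, S') := tr in S0 a /\ inf S' /\ forall j, S' j -> S0 j /\ a < j /\ col a j = k).
  assert (Hex : forall S0, inf S0 -> exists tr, stepP S0 tr).
  { intros S0 HS. destruct (HS 0) as [a [_ Ha]].
    assert (Hi : inf (fun j => S0 j /\ a < j)).
    { intros n. destruct (HS (S (Nat.max n a))) as [m [Hm Sm]]. exists m. split; [lia|split; [auto|lia]]. }
    destruct (iph _ (fun j => S0 j /\ a < j) (col a) HK Hi) as [k Hk].
    exists (a, k, fun j => (S0 j /\ a < j) /\ col a j = k). simpl.
    split; [exact Ha|]. split; [exact Hk|]. intros j [[h1 h2] h3]. auto. }
  set (k0 := col 0 0).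
  set (step := fun S0 => epsilon (inhabits (0, k0, S0)) (stepP S0)).
  set (stage := fix stage n := match n with 0 => fun _ => True | S n => snd (step (stage n)) end).
  assert (Hstep : forall S0, inf S0 -> stepP S0 (step S0)).
  { intros S0 HS. unfold step. apply epsilon_spec. apply Hex, HS. }
  assert (Hinf : forall n, inf (stage n)).
  { induction n as [|n IH].
    - intros n; exists n; split; [lia|exact I].
    - change (inf (snd (step (stage n)))). pose proof (Hstep _ IH) as H.
      destruct (step (stage n)) as [[x k] S']. simpl in *. tauto. }
  assert (Hst : forall n, stepP (stage n) (step (stage n))) by (intros; apply Hstep, Hinf).
  set (a := fun n => fst (fst (step (stage n)))).
  set (kk := fun n => snd (fst (step (stage n)))).
  assert (Ha : forall n, stage n (a n)).
  { intros n. pose proof (Hst n) as H. unfold a. destruct (step (stage n)) as [[x k] S']. simpl. exact (proj1 H). }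
  assert (Hsub : forall n j, stage (S n) j -> stage n j /\ a n < j /\ col (a n) j = kk n).
  { intros n j. pose proof (Hst n) as H. unfold a, kk. change (stage (S n)) with (snd (step (stage n))). destruct (step (stage n)) as [[x k] S'].
    simpl in *. intros Hj. apply (proj2 (proj2 H) j Hj). }
  assert (Hmono : forall n m, n < m -> forall j, stage m j -> stage (S n) j).
  { intros n m Hnm. induction Hnm as [|m Hm IH]; intros j Hj; [exact Hj|].
    apply IH. apply (Hsub m j Hj). }
  assert (Hcol : forall n m, n < m -> a n < a m /\ col (a n) (a m) = kk n).
  { intros n m Hnm. destruct (Hsub n (a m) (Hmono n m Hnm (a m) (Ha m))) as [_ H]. exact H. }
  assert (Hi : inf (fun _ => True)) by (intros n; exists n; split; [lia|exact I]).
  destruct (iph _ (fun _ => True) kk HK Hi) as [k Hk].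
  destruct (enum _ Hk) as [e [He0 [_ He]]].
  exists (fun t => a (e t)). split.
  - intros t. apply Hcol. apply He.
  - exists k. intros t. destruct (He t) as [h1 [_ _]].
    rewrite (proj2 (Hcol _ _ h1)).
    assert (E : forall t, kk (e t) = k).
    { intros [|t']; [apply He0|apply (He t')]. }
    apply E.
Qed.

Section Profiles.
Variable Sg : Type.
Variable N : nat.

Definition Tmpl := ((Sg -> fN N -> fN N -> Prop) * (fN N -> Prop))%type.

Fixpoint Rr (T : Tmpl) (w : list Sg) (p q : fN N) : Prop :=
  match w with
  | [] => p = q
  | s :: w' => exists m, fst T s p m /\ Rr T w' m q
  end.

Fixpoint RF (T : Tmpl) (w : list Sg) (p q : fN N) : Prop :=
  match w with
  | [] => p = q /\ snd T p
  | s :: w' => exists m, fst T s p m /\ ((snd T p /\ Rr T w' m q) \/ RF T w' m q)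
  end.

Definition Prof := Tmpl -> fN N -> fN N -> bool -> Prop.

Definition Phi (w : list Sg) : Prof := fun T p q b => if b then RF T w p q else Rr T w p q.

Definition mul (f g : Prof) : Prof := fun T p q b =>
  if b then exists m, (f T p m true /\ g T m q false) \/ (f T p m false /\ g T m q true)
  else exists m, f T p m false /\ g T m q false.

Lemma Rr_app T w1 w2 p q : Rr T (w1 ++ w2) p q <-> exists m, Rr T w1 p m /\ Rr T w2 m q.
Proof.
  revert p. induction w1 as [|s w1 IH]; intros p; simpl.
  - split; [intros H; exists p; auto|intros [m [-> H]]; exact H].
  - split.
    + intros [m [Hm H]]. apply IH in H. destruct H as [m' [H1 H2]]. exists m'. split; [exists m; auto|auto].
    + intros [m' [[m [Hm H1]] H2]]. exists m. split; [auto|]. apply IH. eauto.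
Qed.

Lemma RF_first T w p q : snd T p -> Rr T w p q -> RF T w p q.
Proof.
  destruct w as [|s w]; simpl.
  - intros H1 H2. auto.
  - intros H1 [m [Hm H2]]. exists m. auto.
Qed.

Lemma RF_app T w1 w2 p q : RF T (w1 ++ w2) p q <->
  exists m, (RF T w1 p m /\ Rr T w2 m q) \/ (Rr T w1 p m /\ RF T w2 m q).
Proof.
  revert p. induction w1 as [|s w1 IH]; intros p; simpl.
  - split.
    + intros H. exists p. right. auto.
    + intros [m [[[-> H1] H2]|[-> H2]]]; [apply RF_first; auto|exact H2].
  - split.
    + intros [m [Hm [[Hf H]|H]]].
      * apply Rr_app in H. destruct H as [m' [H1 H2]]. exists m'. left. split; [|exact H2].
        exists m. split; [exact Hm|]. left. auto.
      * apply IH in H. destruct H as [m' [[H1 H2]|[H1 H2]]].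
        -- exists m'. left. split; [|exact H2]. exists m. split; [exact Hm|]. right. exact H1.
        -- exists m'. right. split; [|exact H2]. exists m. auto.
    + intros [m' [[[m [Hm [[Hf H1]|H1]]] H2]|[[m [Hm H1]] H2]]].
      * exists m. split; [exact Hm|]. left. split; [exact Hf|]. apply Rr_app. eauto.
      * exists m. split; [exact Hm|]. right. apply IH. exists m'. left. auto.
      * exists m. split; [exact Hm|]. right. apply IH. exists m'. right. auto.
Qed.

Lemma Phi_app w1 w2 : Phi (w1 ++ w2) = mul (Phi w1) (Phi w2).
Proof.
  apply functional_extensionality; intros T.
  apply functional_extensionality; intros p.
  apply functional_extensionality; intros q.
  apply functional_extensionality; intros b.
  apply propositional_extensionality. destruct b; simpl.
  - apply RF_app.
  - apply Rr_app.
Qed.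

Lemma Phi_R w1 w2 T p q : Phi w1 = Phi w2 -> (Rr T w1 p q <-> Rr T w2 p q).
Proof.
  intros E. assert (E' := f_equal (fun f => f T p q false) E). simpl in E'. rewrite E'. tauto.
Qed.

Lemma Phi_RF w1 w2 T p q : Phi w1 = Phi w2 -> (RF T w1 p q <-> RF T w2 p q).
Proof.
  intros E. assert (E' := f_equal (fun f => f T p q true) E). simpl in E'. rewrite E'. tauto.
Qed.

Lemma Fin_Prof : Fin Sg -> Fin Prof.
Proof.
  intros HS. unfold Prof, Tmpl.
  assert (HN := Fin_fN N).
  repeat (apply Fin_fun || apply Fin_prod); auto using Fin_Prop, Fin_bool.
Qed.

Fixpoint sub (y : word Sg) (i n : nat) : list Sg :=
  match n with 0 => [] | S n' => y i :: sub y (S i) n' end.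

Lemma sub_snoc y i n : sub y i (S n) = sub y i n ++ [y (i + n)].
Proof.
  revert i. induction n as [|n IH]; intros i; simpl.
  - rewrite Nat.add_0_r. reflexivity.
  - f_equal. replace (i + S n) with (S i + n) by lia. rewrite <- IH. reflexivity.
Qed.

Lemma Rr_run T y i n p q : Rr T (sub y i n) p q -> exists rho : nat -> fN N,
  rho i = p /\ rho (i + n) = q /\ forall k, i <= k -> k < i + n -> fst T (y k) (rho k) (rho (S k)).
Proof.
  revert i p. induction n as [|n IH]; intros i p H; simpl in H.
  - exists (fun _ => p). rewrite Nat.add_0_r. split; [auto|split; [auto|intros; lia]].
  - destruct H as [m [Hm H]]. destruct (IH (S i) m H) as [rho [H1 [H2 H3]]].
    exists (fun k => if Nat.eq_dec k i then p else rho k). split.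
    + destruct (Nat.eq_dec i i); [auto|congruence].
    + split.
      * destruct (Nat.eq_dec (i + S n) i); [lia|]. rewrite <- H2. f_equal. lia.
      * intros k Hk1 Hk2. destruct (Nat.eq_dec k i) as [->|Hne].
        -- destruct (Nat.eq_dec (S i) i); [lia|]. rewrite H1. exact Hm.
        -- destruct (Nat.eq_dec (S k) i); [lia|]. apply H3; lia.
Qed.

Lemma RF_run T y i n p q : RF T (sub y i n) p q -> exists rho : nat -> fN N,
  rho i = p /\ rho (i + n) = q /\ (forall k, i <= k -> k < i + n -> fst T (y k) (rho k) (rho (S k)))
  /\ exists k, i <= k /\ k <= i + n /\ snd T (rho k).
Proof.
  revert i p. induction n as [|n IH]; intros i p H; simpl in H.
  - destruct H as [-> Hf]. exists (fun _ => q). rewrite Nat.add_0_r.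
    split; [auto|split; [auto|split; [intros; lia|exists i; split; [lia|split; [lia|auto]]]]].
  - destruct H as [m [Hm [[Hf H]|H]]].
    + destruct (Rr_run T y (S i) n m q H) as [rho [H1 [H2 H3]]].
      exists (fun k => if Nat.eq_dec k i then p else rho k). split.
      * destruct (Nat.eq_dec i i); [auto|congruence].
      * split.
        -- destruct (Nat.eq_dec (i + S n) i); [lia|]. rewrite <- H2. f_equal. lia.
        -- split.
           ++ intros k Hk1 Hk2. destruct (Nat.eq_dec k i) as [->|Hne].
              ** destruct (Nat.eq_dec (S i) i); [lia|]. rewrite H1. exact Hm.
              ** destruct (Nat.eq_dec (S k) i); [lia|]. apply H3; lia.
           ++ exists i. split; [lia|split; [lia|]]. destruct (Nat.eq_dec i i); [auto|congruence].
    + destruct (IH (S i) m H) as [rho [H1 [H2 [H3 [k0 [Hk1 [Hk2 Hk3]]]]]]].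
      exists (fun k => if Nat.eq_dec k i then p else rho k). split.
      * destruct (Nat.eq_dec i i); [auto|congruence].
      * split.
        -- destruct (Nat.eq_dec (i + S n) i); [lia|]. rewrite <- H2. f_equal. lia.
        -- split.
           ++ intros k Hk1' Hk2'. destruct (Nat.eq_dec k i) as [->|Hne].
              ** destruct (Nat.eq_dec (S i) i); [lia|]. rewrite H1. exact Hm.
              ** destruct (Nat.eq_dec (S k) i); [lia|]. apply H3; lia.
           ++ exists k0. split; [lia|split; [lia|]]. destruct (Nat.eq_dec k0 i); [lia|auto].
Qed.

Lemma run_Rr T y (r : nat -> fN N) i n :
  (forall k, i <= k -> k < i + n -> fst T (y k) (r k) (r (S k))) -> Rr T (sub y i n) (r i) (r (i + n)).
Proof.
  revert i. induction n as [|n IH]; intros i H; simpl.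
  - f_equal. lia.
  - exists (r (S i)). split; [apply H; lia|].
    replace (i + S n) with (S i + n) by lia. apply IH. intros k H1 H2. apply H; lia.
Qed.

Lemma run_RF T y (r : nat -> fN N) i n :
  (forall k, i <= k -> k < i + n -> fst T (y k) (r k) (r (S k))) ->
  (exists k, i <= k /\ k <= i + n /\ snd T (r k)) -> RF T (sub y i n) (r i) (r (i + n)).
Proof.
  revert i. induction n as [|n IH]; intros i H [k [Hk1 [Hk2 Hk3]]]; simpl.
  - rewrite Nat.add_0_r. split; [auto|]. replace i with k by lia. exact Hk3.
  - exists (r (S i)). split; [apply H; lia|].
    replace (i + S n) with (S i + n) by lia.
    destruct (Nat.eq_dec k i) as [->|Hne].
    + left. split; [exact Hk3|]. apply run_Rr. intros k' H1 H2. apply H; lia.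
    + right. apply IH; [intros k' H1 H2; apply H; lia|]. exists k. split; [lia|split; [lia|auto]].
Qed.

End Profiles.

Arguments Rr {Sg N}. Arguments RF {Sg N}. Arguments Phi {Sg N}. Arguments mul {Sg N}.
Arguments sub {Sg}.

Section Cuts.
Variable c : nat -> nat.

Fixpoint seg (k : nat) : nat :=
  match k with 0 => 0 | S k' => if S k' <? c (S (seg k')) then seg k' else S (seg k') end.

Definition cuts := c 0 = 0 /\ forall i, c i < c (S i).

Lemma c_mono : cuts -> forall i j, i < j -> c i < c j.
Proof.
  intros [_ H] i j Hij. induction Hij as [|j Hj IH]; [apply H|]. specialize (H j). lia.
Qed.

Lemma c_le : cuts -> forall i j, i <= j -> c i <= c j.
Proof.
  intros Hc i j Hij. destruct (Nat.eq_dec i j) as [->|Hne]; [lia|].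
  assert (c i < c j) by (apply c_mono; [auto|lia]). lia.
Qed.

Lemma c_ge : cuts -> forall i, i <= c i.
Proof.
  intros [H0 H] i. induction i as [|i IH]; [lia|]. specialize (H i). lia.
Qed.

Lemma seg_spec : cuts -> forall k, c (seg k) <= k /\ k < c (S (seg k)).
Proof.
  intros [H0 H] k. induction k as [|k [IH1 IH2]]; simpl.
  - rewrite H0. split; [lia|]. specialize (H 0). lia.
  - destruct (S k <? c (S (seg k))) eqn:E.
    + apply Nat.ltb_lt in E. lia.
    + apply Nat.ltb_ge in E. specialize (H (S (seg k))). lia.
Qed.

Lemma seg_unique : cuts -> forall i k, c i <= k -> k < c (S i) -> seg k = i.
Proof.
  intros Hc i k H1 H2. destruct (seg_spec Hc k) as [H3 H4].
  destruct (Nat.lt_trichotomy (seg k) i) as [Hl|[He|Hl]]; [|exact He|].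
  - assert (c (S (seg k)) <= c i) by (apply c_le; [auto|lia]). lia.
  - assert (c (S i) <= c (seg k)) by (apply c_le; [auto|lia]). lia.
Qed.

End Cuts.

Definition blk {Sg : Type} (y : word Sg) (c : nat -> nat) (i : nat) := sub y (c i) (c (S i) - c i).

Definition tmpl {Sg : Type} (N : nat) (A : buchi Sg) : Tmpl Sg N :=
  (fun s p q => proj1_sig p < nst A /\ proj1_sig q < nst A /\ btrans A (proj1_sig p) s (proj1_sig q),
   fun p => bfinal A (proj1_sig p)).

Lemma acc_cuts {Sg : Type} (N : nat) (A : buchi Sg) (y : word Sg) (c : nat -> nat) :
  nst A <= N -> cuts c ->
  (accepts A y <-> exists m : nat -> fN N, binit A (proj1_sig (m 0)) /\
     (forall i, Rr (tmpl N A) (blk y c i) (m i) (m (S i))) /\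
     (forall I, exists i, I <= i /\ RF (tmpl N A) (blk y c i) (m i) (m (S i)))).
Proof.
  intros HN Hc. split.
  - intros [r [[Hi Hr] Hacc]].
    set (rf := fun k => exist (fun p => p < N) (r k) (Nat.lt_le_trans _ _ _ (proj1 (Hr k)) HN)).
    assert (Hst : forall k, fst (tmpl N A) (y k) (rf k) (rf (S k))).
    { intros k. simpl. split; [apply Hr|]. split; [apply Hr|apply Hr]. }
    exists (fun i => rf (c i)). split; [simpl; rewrite (proj1 Hc); exact Hi|]. split.
    + intros i. unfold blk. pose proof (run_Rr _ _ (tmpl N A) y rf (c i) (c (S i) - c i)) as H.
      replace (c i + (c (S i) - c i)) with (c (S i)) in H by (pose proof (proj2 Hc i); lia).
      apply H. intros; apply Hst.
    + intros I. destruct (Hacc (c I)) as [k [Hk Hf]].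
      set (i := seg c k). destruct (seg_spec c Hc k) as [H1 H2]. fold i in H1, H2.
      exists i. split.
      * destruct (le_lt_dec I i) as [l|l]; [exact l|].
        assert (c (S i) <= c I) by (apply c_le; [auto|lia]). lia.
      * unfold blk. pose proof (run_RF _ _ (tmpl N A) y rf (c i) (c (S i) - c i)) as H.
        replace (c i + (c (S i) - c i)) with (c (S i)) in H by lia.
        apply H; [intros; apply Hst|]. exists k. split; [lia|split; [lia|exact Hf]].
  - intros [m [Hi [Hm Hinf]]].
    assert (Hrho : forall i, exists rho : nat -> fN N, rho (c i) = m i /\ rho (c (S i)) = m (S i) /\
       (forall k, c i <= k -> k < c (S i) -> fst (tmpl N A) (y k) (rho k) (rho (S k))) /\
       (RF (tmpl N A) (blk y c i) (m i) (m (S i)) -> exists k, c i <= k /\ k <= c (S i) /\ snd (tmpl N A) (rho k))).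
    { intros i. assert (Hlt := proj2 Hc i).
      destruct (classic (RF (tmpl N A) (blk y c i) (m i) (m (S i)))) as [HF|HF].
      - destruct (RF_run _ _ _ _ _ _ _ _ HF) as [rho [H1 [H2 [H3 H4]]]].
        replace (c i + (c (S i) - c i)) with (c (S i)) in * by lia.
        exists rho. split; [auto|split; [auto|split; [auto|intros _; auto]]].
      - destruct (Rr_run _ _ _ _ _ _ _ _ (Hm i)) as [rho [H1 [H2 H3]]].
        replace (c i + (c (S i) - c i)) with (c (S i)) in * by lia.
        exists rho. split; [auto|split; [auto|split; [auto|intros Hc'; contradiction]]]. }
    set (rhos := fun i => proj1_sig (constructive_indefinite_description _ (Hrho i))).
    assert (Hs : forall i, rhos i (c i) = m i /\ rhos i (c (S i)) = m (S i) /\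
       (forall k, c i <= k -> k < c (S i) -> fst (tmpl N A) (y k) (rhos i k) (rhos i (S k))) /\
       (RF (tmpl N A) (blk y c i) (m i) (m (S i)) -> exists k, c i <= k /\ k <= c (S i) /\ snd (tmpl N A) (rhos i k))).
    { intros i. unfold rhos. destruct (constructive_indefinite_description _ (Hrho i)). simpl. exact a. }
    assert (Hseg : forall k, rhos (seg c (S k)) (S k) = rhos (seg c k) (S k)).
    { intros k. destruct (seg_spec c Hc k) as [H1 H2]. set (i := seg c k) in *.
      destruct (Nat.eq_dec (S k) (c (S i))) as [E|E].
      + rewrite (seg_unique c Hc (S i) (S k)); [|lia|rewrite E; apply (proj2 Hc)].
        rewrite E. rewrite (proj1 (Hs (S i))). rewrite (proj1 (proj2 (Hs i))). reflexivity.
      + rewrite (seg_unique c Hc i (S k)); [reflexivity|lia|lia]. }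
    exists (fun k => proj1_sig (rhos (seg c k) k)). split; [split|].
    + simpl. rewrite <- (proj1 Hc) at 2. rewrite (proj1 (Hs 0)). exact Hi.
    + intros k. destruct (seg_spec c Hc k) as [H1 H2].
      destruct (Hs (seg c k)) as [_ [_ [H3 _]]]. specialize (H3 k H1 H2). simpl in H3.
      rewrite Hseg. split; [apply H3|apply H3].
    + intros I. destruct (Hinf I) as [i [HI HF]].
      destruct (Hs i) as [_ [E2 [_ H4]]]. destruct (H4 HF) as [k [Hk1 [Hk2 Hk3]]].
      exists k. split.
      * pose proof (c_ge c Hc i). lia.
      * simpl in Hk3. destruct (Nat.eq_dec k (c (S i))) as [->|Hne].
        -- rewrite (seg_unique c Hc (S i) (c (S i))); [|lia|apply (proj2 Hc)].
           rewrite (proj1 (Hs (S i))). rewrite <- E2. exact Hk3.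
        -- rewrite (seg_unique c Hc i k); [exact Hk3|lia|lia].
Qed.


Lemma sat {Sg : Type} (N : nat) (A : buchi Sg) (y z : word Sg) (c c' : nat -> nat) :
  nst A <= N -> cuts c -> cuts c' ->
  (forall i, @Phi Sg N (blk y c i) = Phi (blk z c' i)) -> (accepts A y <-> accepts A z).
Proof.
  intros HN Hc Hc' HP. rewrite (acc_cuts N A y c HN Hc), (acc_cuts N A z c' HN Hc').
  split; intros [m [H1 [H2 H3]]]; exists m; split; auto; split.
  - intros i. apply (Phi_R _ _ _ _ _ _ _ (HP i)). auto.
  - intros I. destruct (H3 I) as [i [Hi H]]. exists i. split; auto. apply (Phi_RF _ _ _ _ _ _ _ (HP i)). auto.
  - intros i. apply (Phi_R _ _ _ _ _ _ _ (HP i)). auto.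
  - intros I. destruct (H3 I) as [i [Hi H]]. exists i. split; auto. apply (Phi_RF _ _ _ _ _ _ _ (HP i)). auto.
Qed.

Definition mkB {Sg X : Type} (K : nat) (enc : X -> nat) (ini fin : X -> Prop)
  (stp : X -> Sg -> X -> Prop) : buchi Sg :=
  {| nst := K; binit := fun p => exists x, enc x = p /\ ini x;
     bfinal := fun p => exists x, enc x = p /\ fin x;
     btrans := fun p s q => exists x x', enc x = p /\ enc x' = q /\ stp x s x' |}.

Lemma mkB_acc {Sg X : Type} (K : nat) (enc : X -> nat) (ini fin : X -> Prop)
  (stp : X -> Sg -> X -> Prop) (y : word Sg) :
  (forall x, enc x < K) -> (forall x x', enc x = enc x' -> x = x') ->
  (accepts (mkB K enc ini fin stp) y <-> exists rho : nat -> X, ini (rho 0) /\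
     (forall k, stp (rho k) (y k) (rho (S k))) /\ forall I, exists k, I <= k /\ fin (rho k)).
Proof.
  intros Hb Hinj. split.
  - intros [r [[Hi Hr] Hacc]]. simpl in *.
    assert (Hex : forall k, exists x, enc x = r k).
    { intros k. destruct (proj2 (Hr k)) as [x [x' [E _]]]. eauto. }
    set (rho := fun k => proj1_sig (constructive_indefinite_description _ (Hex k))).
    assert (Hrho : forall k, enc (rho k) = r k).
    { intros k. unfold rho. destruct (constructive_indefinite_description _ (Hex k)). simpl. auto. }
    exists rho. split; [|split].
    + destruct Hi as [x [E H]]. replace (rho 0) with x; [auto|]. apply Hinj. rewrite Hrho. auto.
    + intros k. destruct (proj2 (Hr k)) as [x [x' [E1 [E2 H]]]].
      replace (rho k) with x by (apply Hinj; rewrite Hrho; auto).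
      replace (rho (S k)) with x' by (apply Hinj; rewrite Hrho; auto). exact H.
    + intros I. destruct (Hacc I) as [k [Hk [x [E H]]]]. exists k. split; auto.
      replace (rho k) with x by (apply Hinj; rewrite Hrho; auto). exact H.
  - intros [rho [Hi [Hs Hf]]]. exists (fun k => enc (rho k)). split; [split|].
    + simpl. eauto.
    + intros k. simpl. split; [apply Hb|]. exists (rho k), (rho (S k)). auto.
    + intros I. destruct (Hf I) as [k [Hk H]]. exists k. split; auto. simpl. eauto.
Qed.

Section CAut.
Variable Sg : Type.
Variable N : nat.
Variables pu pv : Prof Sg N.

Definition St := option (bool * Prof Sg N * bool).

Definition cstep (x : St) (s : Sg) (x' : St) : Prop :=
  match x with
  | None => x' = Some (false, Phi [s], false)
  | Some (ph, pi, _) => x' = Some (ph, mul pi (Phi [s]), false) \/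
       ((if ph then pi = pv else pi = pu) /\ x' = Some (true, Phi [s], true))
  end.

Definition cfin (x : St) : Prop := match x with Some (_, _, b) => b = true | None => False end.

Definition Lang (y : word Sg) : Prop :=
  exists c, cuts c /\ Phi (blk y c 0) = pu /\ forall i, Phi (blk y c (S i)) = pv.

Definition phb (i : nat) : bool := match i with 0 => false | S _ => true end.

Lemma Phi_snoc (y : word Sg) (ci k : nat) : ci <= k ->
  @Phi Sg N (sub y ci (S (S k) - ci)) = mul (Phi (sub y ci (S k - ci))) (Phi [y (S k)]).
Proof.
  intros H. replace (S (S k) - ci) with (S (S k - ci)) by lia.
  rewrite sub_snoc. rewrite Phi_app. replace (ci + (S k - ci)) with (S k) by lia. reflexivity.
Qed.

Definition rhoC (y : word Sg) (c : nat -> nat) (k : nat) : St :=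
  match k with 0 => None | S k' =>
     Some (phb (seg c k'), Phi (sub y (c (seg c k')) (S k' - c (seg c k'))),
           andb (phb (seg c k')) (k' =? c (seg c k'))) end.

Lemma rhoC_S y c k : rhoC y c (S k) = Some (phb (seg c k), Phi (sub y (c (seg c k)) (S k - c (seg c k))),
           andb (phb (seg c k)) (k =? c (seg c k))).
Proof. reflexivity. Qed.

Lemma C_complete (y : word Sg) : Lang y -> exists rho : nat -> St, rho 0 = None /\
  (forall k, cstep (rho k) (y k) (rho (S k))) /\ forall I, exists k, I <= k /\ cfin (rho k).
Proof.
  intros [c [Hc [Hu Hv]]].
  exists (rhoC y c).
  split; [reflexivity|split].
  - intros [|k].
    + rewrite rhoC_S. simpl. rewrite (proj1 Hc). reflexivity.
    + rewrite !rhoC_S. destruct (seg_spec c Hc k) as [H1 H2]. set (i := seg c k) in *.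
      destruct (Nat.eq_dec (S k) (c (S i))) as [E|E].
      * rewrite (seg_unique c Hc (S i) (S k)); [|lia|rewrite E; apply (proj2 Hc)].
        cbn [cstep]. right.
        split.
        -- assert (B : blk y c i = sub y (c i) (S k - c i)) by (unfold blk; rewrite <- E; reflexivity).
           destruct i as [|j]; cbn [phb]; rewrite <- B; auto.
        -- rewrite <- E. rewrite Nat.eqb_refl. replace (S (S k) - S k) with 1 by lia. reflexivity.
      * rewrite (seg_unique c Hc i (S k)); [|lia|lia].
        cbn [cstep]. left.
        rewrite Phi_snoc by lia.
        replace (S k =? c i) with false by (symmetry; apply Nat.eqb_neq; lia).
        rewrite Bool.andb_false_r. reflexivity.
  - intros I. exists (S (c (S I))). split; [pose proof (c_ge c Hc (S I)); lia|].
    rewrite rhoC_S. rewrite (seg_unique c Hc (S I) (c (S I))); [|lia|apply (proj2 Hc)].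
    simpl. apply Nat.eqb_refl.
Qed.

End CAut.

Section CAut2.
Variable Sg : Type.
Variable N : nat.
Variables pu pv : Prof Sg N.

Lemma C_sound (y : word Sg) (rho : nat -> St Sg N) : rho 0 = None ->
  (forall k, cstep Sg N pu pv (rho k) (y k) (rho (S k))) ->
  (forall I, exists k, I <= k /\ cfin Sg N (rho k)) -> Lang Sg N pu pv y.
Proof.
  intros H0 Hs Hinf.
  set (P := fun k => cfin Sg N (rho k)).
  assert (HP : inf P) by exact Hinf.
  destruct (enum P HP) as [f [Pf0 [Hmin Hf]]].
  assert (Pf : forall t, P (f t)) by (intros [|t]; [exact Pf0|apply (Hf t)]).
  assert (Hall := enum_all P f Pf0 Hmin Hf).
  assert (R1 : rho 1 = Some (false, Phi [y 0], false)).
  { specialize (Hs 0). rewrite H0 in Hs. exact Hs. }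
  assert (Hf0 : 2 <= f 0).
  { destruct (le_lt_dec 2 (f 0)) as [l|l]; [exact l|]. exfalso.
    pose proof Pf0 as Q. unfold P in Q.
    assert (E : f 0 = 0 \/ f 0 = 1) by lia. destruct E as [E|E]; rewrite E in Q.
    - rewrite H0 in Q. exact Q.
    - rewrite R1 in Q. simpl in Q. discriminate. }
  assert (Hfge : forall t, f 0 <= f t).
  { induction t as [|t IH]; [lia|]. destruct (Hf t) as [h _]. lia. }
  set (c := fun t => match t with 0 => 0 | S t' => f t' - 1 end).
  assert (Hc : cuts c).
  { split; [reflexivity|]. intros [|t]; simpl.
    - lia.
    - destruct (Hf t) as [h _]. pose proof (Hfge t). lia. }
  assert (Hcf : forall t, S (c (S t)) = f t).
  { intros t. simpl. pose proof (Hfge t). lia. }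
  assert (Claim : forall k, exists fl, rho (S k) =
     Some (phb (seg c k), Phi (sub y (c (seg c k)) (S k - c (seg c k))), fl)).
  { induction k as [|k [fl IH]].
    - exists false. rewrite R1. reflexivity.
    - destruct (seg_spec c Hc k) as [H1 H2]. set (i := seg c k) in *.
      pose proof (Hs (S k)) as Hst. rewrite IH in Hst. cbn [cstep] in Hst.
      destruct (classic (P (S (S k)))) as [Hp|Hp].
      + destruct (Hall _ Hp) as [t Ht].
        assert (Ec : c (S t) = S k) by (pose proof (Hcf t); lia).
        rewrite (seg_unique c Hc (S t) (S k)); [|lia|rewrite <- Ec; apply (proj2 Hc)].
        destruct Hst as [Hst|[_ Hst]].
        * exfalso. unfold P in Hp. rewrite Hst in Hp. simpl in Hp. discriminate.
        * rewrite Hst. exists true. rewrite Ec. replace (S (S k) - S k) with 1 by lia. reflexivity.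
      + assert (Hsi : S k < c (S i)).
        { destruct (Nat.eq_dec (S k) (c (S i))) as [E|E]; [|lia].
          exfalso. apply Hp. rewrite E, Hcf. apply Pf. }
        rewrite (seg_unique c Hc i (S k)); [|lia|lia].
        destruct Hst as [Hst|[_ Hst]].
        * rewrite Hst. exists false. rewrite Phi_snoc by lia. reflexivity.
        * exfalso. apply Hp. unfold P. rewrite Hst. reflexivity. }
  assert (Blk : forall t, if phb t then Phi (blk y c t) = pv else Phi (blk y c t) = pu).
  { intros t. destruct (c (S t)) as [|k'] eqn:Ek.
    - exfalso. pose proof (proj2 Hc t). lia.
    - assert (Hseg : seg c k' = t).
      { apply seg_unique; [exact Hc| |lia]. pose proof (proj2 Hc t). lia. }
      destruct (Claim k') as [fl Hk]. rewrite Hseg in Hk.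
      pose proof (Hs (S k')) as Hst. rewrite Hk in Hst. cbn [cstep] in Hst.
      assert (Pk : P (S (S k'))) by (rewrite <- Ek, Hcf; apply Pf).
      unfold blk. rewrite Ek.
      destruct Hst as [Hst|[Hq _]].
      + exfalso. unfold P in Pk. rewrite Hst in Pk. simpl in Pk. discriminate.
      + exact Hq. }
  exists c. split; [exact Hc|]. split.
  - exact (Blk 0).
  - intros i. exact (Blk (S i)).
Qed.

End CAut2.

Lemma nbhd {Sg : Type} (N : nat) (HS : Fin Sg) (x : word Sg) : exists C : buchi Sg,
  accepts C x /\ forall y, accepts C y -> forall A, nst A <= N -> (accepts A x <-> accepts A y).
Proof.
  destruct (ramsey (Prof Sg N) (fun i j => Phi (sub x i (j - i))) (Fin_Prof Sg N HS)) as [h [Hh [k Hk]]].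
  set (c := fun t => match t with 0 => 0 | S t' => h (S t') end).
  assert (Hc : cuts c).
  { split; [reflexivity|]. intros [|t]; simpl; [pose proof (Hh 0)|pose proof (Hh (S t))]; lia. }
  set (pu := @Phi Sg N (blk x c 0)).
  assert (Lx : Lang Sg N pu k x).
  { exists c. split; [exact Hc|]. split; [reflexivity|]. intros i. apply (Hk (S i)). }
  assert (HSt : Fin (St Sg N)).
  { apply Fin_option. apply Fin_prod; [apply Fin_prod|]; auto using Fin_bool, Fin_Prof. }
  destruct (Fin_enc _ HSt) as [K [enc [Hb Hinj]]].
  exists (mkB K enc (fun z => z = None) (cfin Sg N) (cstep Sg N pu k)).
  split.
  - apply mkB_acc; auto. apply C_complete. exact Lx.
  - intros y Hy A HA. apply mkB_acc in Hy; auto. destruct Hy as [rho [H0 [Hs Hf]]].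
    destruct (C_sound Sg N pu k y rho H0 Hs Hf) as [c' [Hc' [Hu' Hv']]].
    apply (sat N A x y c c' HA Hc Hc'). intros [|i].
    + rewrite Hu'. reflexivity.
    + rewrite Hv'. apply (Hk (S i)).
Qed.

Definition posA {Sg : Type} (j : nat) (cc : Sg) : buchi Sg :=
  {| nst := j + 2; binit := fun p => p = 0; bfinal := fun p => p = S j;
     btrans := fun p s q => (p < j /\ q = S p) \/ (p = j /\ s = cc /\ q = S j) \/ (p = S j /\ q = S j) |}.

Lemma posA_acc {Sg : Type} (j : nat) (cc : Sg) (w : word Sg) : accepts (posA j cc) w <-> w j = cc.
Proof.
  split.
  - intros [r [[Hi Hr] _]]. simpl in *.
    assert (Hrt : forall t, t <= j -> r t = t).
    { induction t as [|t IH]; intros Ht; [exact Hi|].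
      assert (Et : r t = t) by (apply IH; lia).
      destruct (proj2 (Hr t)) as [[_ E]|[[E _]|[E _]]]; lia. }
    assert (Ej : r j = j) by (apply Hrt; lia).
    destruct (proj2 (Hr j)) as [[E _]|[[_ [E _]]|[E _]]]; [lia|exact E|lia].
  - intros Hw. exists (fun t => Nat.min t (S j)). split; [split|].
    + reflexivity.
    + intros t. simpl. split; [lia|].
      destruct (lt_eq_lt_dec t j) as [[l|e]|l].
      * left. lia.
      * right. left. subst. split; [lia|split; [auto|lia]].
      * right. right. lia.
    + intros I. exists (S (I + j)). split; [lia|]. simpl. lia.
Qed.

Definition hasB {Sg : Type} (b : Sg) : buchi Sg :=
  {| nst := 2; binit := fun p => p = 0; bfinal := fun p => p = 1;
     btrans := fun p s q => (p = 0 /\ q = 0) \/ (p = 0 /\ s = b /\ q = 1) \/ (p = 1 /\ q = 1) |}.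

Lemma hasB_acc {Sg : Type} (b : Sg) (w : word Sg) : accepts (hasB b) w <-> exists k, w k = b.
Proof.
  split.
  - intros [r [[Hi Hr] Hacc]]. simpl in *. destruct (Hacc 0) as [k [_ Hk]].
    clear Hacc. revert Hk. induction k as [|k IH]; intros Hk; simpl in Hk; [lia|].
    destruct (proj2 (Hr k)) as [[_ E]|[[_ [E _]]|[E _]]]; [lia|eauto|auto].
  - intros [k Hk]. exists (fun t => if t <=? k then 0 else 1). split; [split|].
    + reflexivity.
    + intros t. cbv beta.
      destruct (Nat.leb_spec t k) as [l|l]; destruct (Nat.leb_spec (S t) k) as [l'|l']; simpl.
      * split; [lia|]. left. auto.
      * split; [lia|]. right. left. assert (t = k) by lia. subst. auto.
      * lia.
      * split; [lia|]. right. right. auto.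
    + intros I. exists (S (I + k)). split; [lia|]. cbv beta.
      destruct (Nat.leb_spec (S (I + k)) k); [lia|reflexivity].
Qed.

Open Scope R_scope.

Lemma inv2_pos (n : nat) : 0 < / 2 ^ n.
Proof. apply Rinv_0_lt_compat, pow_lt. lra. Qed.

Lemma inv2_lt (n m : nat) : (n < m)%nat -> / 2 ^ m < / 2 ^ n.
Proof.
  intros H. apply Rinv_lt_contravar.
  - apply Rmult_lt_0_compat; apply pow_lt; lra.
  - apply Rlt_pow; [lra|auto].
Qed.

Lemma inv2_le (n m : nat) : (n <= m)%nat -> / 2 ^ m <= / 2 ^ n.
Proof.
  intros H. apply Rinv_le_contravar; [apply pow_lt; lra|]. apply Rle_pow; [lra|auto].
Qed.

Lemma inv2_small (eps : R) : 0 < eps -> exists K : nat, / 2 ^ K < eps.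
Proof.
  intros He. destruct (pow_lt_1_zero (/ 2)) with (y := eps) as [K HK].
  - rewrite Rabs_pos_eq; lra.
  - exact He.
  - exists K. specialize (HK K (le_n K)). rewrite pow_inv in HK.
    rewrite Rabs_pos_eq in HK; [exact HK|]. left. apply inv2_pos.
Qed.

Section Delta.
Variable Sg : Type.

Lemma sep_exists (x y : word Sg) : x <> y -> exists A : buchi Sg, separates A x y.
Proof.
  intros Hne. destruct (classic (exists j, x j <> y j)) as [[j Hj]|Hn].
  - exists (posA j (x j)). unfold separates. rewrite !posA_acc. intros H.
    apply Hj. symmetry. apply H. reflexivity.
  - exfalso. apply Hne. apply functional_extensionality. intros j.
    apply NNPP. intros H. apply Hn. eauto.
Qed.

Lemma minsep_exists (x y : word Sg) : x <> y -> exists n, is_min_sep x y n.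
Proof.
  intros Hne. destruct (sep_exists x y Hne) as [A HA].
  destruct (least (fun n => exists A : buchi Sg, nst A = n /\ separates A x y) (nst A)) as [n [Hn Hmin]].
  - eauto.
  - exists n. split; [exact Hn|]. intros B HB. apply Hmin. eauto.
Qed.

Lemma delta_val (x y : word Sg) : x <> y -> exists n, is_min_sep x y n /\ delta x y = / 2 ^ n.
Proof.
  intros Hne. unfold delta. destruct (excluded_middle_informative (x = y)) as [E|_]; [contradiction|].
  exists (epsilon (inhabits 0%nat) (is_min_sep x y)). split; [|reflexivity].
  apply epsilon_spec. apply minsep_exists, Hne.
Qed.

Lemma delta_xx (x : word Sg) : delta x x = 0.
Proof. unfold delta. destruct (excluded_middle_informative (x = x)); [reflexivity|congruence]. Qed.

Lemma delta_small (x y : word Sg) (N : nat) :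
  (forall A : buchi Sg, (nst A <= N)%nat -> ~ separates A x y) -> delta x y < / 2 ^ N.
Proof.
  intros H. destruct (classic (x = y)) as [->|Hne].
  - rewrite delta_xx. apply inv2_pos.
  - destruct (delta_val x y Hne) as [n [[[A [HA Hs]] _] ->]].
    apply inv2_lt. destruct (le_lt_dec n N) as [l|l]; [|exact l].
    exfalso. apply (H A); [lia|exact Hs].
Qed.

Lemma delta_big (x y : word Sg) (N : nat) :
  delta x y < / 2 ^ N -> forall A : buchi Sg, (nst A <= N)%nat -> ~ separates A x y.
Proof.
  intros H A HA Hs. destruct (classic (x = y)) as [->|Hne].
  - apply Hs. tauto.
  - destruct (delta_val x y Hne) as [n [[_ Hmin] E]]. rewrite E in H.
    specialize (Hmin A Hs). pose proof (inv2_le n N ltac:(lia)). lra.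
Qed.

Lemma delta_dist : is_distance (@delta Sg).
Proof.
  split; [|split; [|split]].
  - intros x y. destruct (classic (x = y)) as [->|Hne].
    + rewrite delta_xx. lra.
    + destruct (delta_val x y Hne) as [n [_ ->]]. left. apply inv2_pos.
  - intros x y. split.
    + intros H. apply NNPP. intros Hne. destruct (delta_val x y Hne) as [n [_ E]].
      pose proof (inv2_pos n). lra.
    + intros ->. apply delta_xx.
  - intros x y. assert (E : is_min_sep x y = is_min_sep y x).
    { apply functional_extensionality. intros n. apply propositional_extensionality.
      unfold is_min_sep, separates. split; intros [[A [H1 H2]] H3]; split.
      - exists A. split; [auto|]. intros H; apply H2; tauto.
      - intros B HB. apply H3. intros H; apply HB; tauto.
      - exists A. split; [auto|]. intros H; apply H2; tauto.
      - intros B HB. apply H3. intros H; apply HB; tauto. }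
    unfold delta. rewrite E.
    destruct (excluded_middle_informative (x = y)); destruct (excluded_middle_informative (y = x));
      congruence.
  - intros x y z.
    assert (Hnn : forall u v : word Sg, 0 <= delta u v).
    { intros u v. destruct (classic (u = v)) as [->|Hne].
      + rewrite delta_xx. lra.
      + destruct (delta_val u v Hne) as [n [_ ->]]. left. apply inv2_pos. }
    destruct (classic (x = y)) as [->|Hxy]; [rewrite delta_xx; lra|].
    destruct (classic (y = z)) as [->|Hyz]; [rewrite (delta_xx z); lra|].
    destruct (classic (x = z)) as [->|Hxz]; [rewrite delta_xx; pose proof (Hnn z y); pose proof (Hnn y z); lra|].
    destruct (delta_val x z Hxz) as [n [[[A [HA Hs]] _] E1]].
    destruct (delta_val x y Hxy) as [n1 [[_ H1] E2]].
    destruct (delta_val y z Hyz) as [n2 [[_ H2] E3]].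
    rewrite E1, E2, E3.
    pose proof (inv2_pos n1). pose proof (inv2_pos n2).
    destruct (classic (separates A x y)) as [S1|S1].
    + pose proof (inv2_le n1 n ltac:(subst; apply H1; exact S1)). lra.
    + assert (S2 : separates A y z).
      { intros Hq. apply Hs. unfold separates in S1. apply NNPP in S1. tauto. }
      pose proof (inv2_le n2 n ltac:(subst; apply H2; exact S2)). lra.
Qed.

End Delta.

Open Scope nat_scope.
Section Seq.
Variable Sg : Type.
Variables a b : Sg.

Definition useq (n : nat) : word Sg :=
  fun k => if (k <? fact n)%nat then a else if (k =? fact n)%nat then b else a.

Lemma useq_lt n k : (k < fact n)%nat -> useq n k = a.
Proof. intros H. unfold useq. destruct (Nat.ltb_spec k (fact n)); [reflexivity|lia]. Qed.

Lemma useq_tail n j : useq n (fact n + j) = match j with 0%nat => b | S _ => a end.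
Proof.
  unfold useq. destruct (Nat.ltb_spec (fact n + j) (fact n)); [lia|].
  destruct j as [|j].
  - rewrite Nat.add_0_r, Nat.eqb_refl. reflexivity.
  - destruct (Nat.eqb_spec (fact n + S j) (fact n)); [lia|reflexivity].
Qed.

Lemma sub_useq n i len : (i + len <= fact n)%nat -> sub (useq n) i len = repeat a len.
Proof.
  revert i. induction len as [|len IH]; intros i H; [reflexivity|].
  simpl. rewrite useq_lt by lia. f_equal. apply IH. lia.
Qed.

Lemma useq_swap (N : nat) (A : buchi Sg) n m : (nst A <= N)%nat ->
  @Phi Sg N (repeat a (fact n)) = Phi (repeat a (fact m)) ->
  (accepts A (useq n) <-> accepts A (useq m)).
Proof.
  intros HA HP.
  set (cn := fun t => match t with 0%nat => 0%nat | S j => (fact n + j)%nat end).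
  set (cm := fun t => match t with 0%nat => 0%nat | S j => (fact m + j)%nat end).
  assert (Hcn : cuts cn).
  { split; [reflexivity|]. intros [|t]; simpl; [pose proof (lt_O_fact n)|]; lia. }
  assert (Hcm : cuts cm).
  { split; [reflexivity|]. intros [|t]; simpl; [pose proof (lt_O_fact m)|]; lia. }
  apply (sat N A _ _ cn cm HA Hcn Hcm). intros [|i].
  - unfold blk. simpl. rewrite !Nat.sub_0_r, !Nat.add_0_r. rewrite !sub_useq by lia. exact HP.
  - unfold blk. simpl. replace (fact n + S i - (fact n + i))%nat with 1%nat by lia.
    replace (fact m + S i - (fact m + i))%nat with 1%nat by lia. simpl.
    rewrite !useq_tail. reflexivity.
Qed.

Lemma fact_ge n : (n <= fact n)%nat.
Proof.
  induction n as [|n IH]; [simpl; lia|]. simpl. pose proof (lt_O_fact n). nia.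
Qed.

Lemma fact_div n d : (1 <= d <= n)%nat -> exists q, fact n = (q * d)%nat.
Proof.
  induction n as [|n IH]; intros H; [lia|].
  destruct (Nat.eq_dec d (S n)) as [->|Hne].
  - exists (fact n). simpl. lia.
  - destruct (IH ltac:(lia)) as [q Hq]. exists (S n * q)%nat. simpl. rewrite Hq. lia.
Qed.

Lemma fact_mono n m : (n <= m)%nat -> exists P, fact m = (fact n * P)%nat.
Proof.
  intros H. induction H as [|m H [P HP]].
  - exists 1%nat. lia.
  - exists (S m * P)%nat. simpl. rewrite HP. lia.
Qed.

Lemma period (N : nat) t1 t2 : (t1 < t2)%nat -> @Phi Sg N (repeat a t1) = Phi (repeat a t2) ->
  forall n m, (t2 <= n)%nat -> (t2 <= m)%nat -> @Phi Sg N (repeat a (fact n)) = Phi (repeat a (fact m)).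
Proof.
  intros Ht E. set (d := (t2 - t1)%nat).
  assert (Sh : forall k r, @Phi Sg N (repeat a (t1 + r + k * d)) = Phi (repeat a (t1 + r))).
  { induction k as [|k IH]; intros r.
    - rewrite Nat.mul_0_l, Nat.add_0_r. reflexivity.
    - replace (t1 + r + S k * d)%nat with (t2 + (r + k * d))%nat by (unfold d; lia).
      rewrite repeat_app, Phi_app, <- E, <- Phi_app, <- repeat_app.
      rewrite <- (IH r). f_equal. f_equal. lia. }
  assert (W : forall n m, (t2 <= n)%nat -> (n <= m)%nat ->
     @Phi Sg N (repeat a (fact n)) = Phi (repeat a (fact m))).
  { intros n m Hn Hnm. destruct (fact_div n d ltac:(unfold d; lia)) as [q Hq].
    destruct (fact_mono n m Hnm) as [P HP].
    pose proof (lt_O_fact m). pose proof (fact_ge n).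
    assert (HP1 : (1 <= P)%nat) by (destruct P; lia).
    replace (fact m) with (t1 + (fact n - t1) + (q * (P - 1)) * d)%nat.
    - rewrite Sh. f_equal. f_equal. lia.
    - rewrite HP. replace (fact n) with (fact n - t1 + t1)%nat at 2 by lia.
      destruct P as [|P]; [lia|]. rewrite Nat.sub_succ, Nat.sub_0_r.
      rewrite Hq. nia. }
  intros n m Hn Hm. destruct (le_ge_dec n m) as [l|l].
  - apply W; auto.
  - symmetry. apply W; auto.
Qed.

End Seq.

Open Scope R_scope.

Theorem proposition3p2 (Sigma : Type)
  (Hfin : exists l : list Sigma, forall a : Sigma, In a l)
  (a b : Sigma) (Hab : a <> b) :
  is_distance (@delta Sigma) /\
  (forall U : word Sigma -> Prop, metric_open (@delta Sigma) U <-> buchi_open U) /\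
  ~ complete (@delta Sigma).
Proof.
  assert (HS : Fin Sigma) by exact Hfin.
  split; [apply delta_dist|split].
  - intros U. split.
    + intros Hop x Ux. destruct (Hop x Ux) as [eps [He Hy]].
      destruct (inv2_small eps He) as [K HK].
      destruct (nbhd K HS x) as [C [Cx HC]].
      exists [fun w => accepts C w]. split.
      * intros L [<-|[]]. split; [exists C; tauto|exact Cx].
      * intros y Hall. apply Hy. specialize (Hall (fun w => accepts C w) (or_introl eq_refl)).
        apply Rlt_trans with (/ 2 ^ K); [|exact HK].
        apply delta_small. intros A HA Hs. apply Hs. apply (HC y Hall A HA).
    + intros Hb x Ux. destruct (Hb x Ux) as [Ls [HL HU]].
      assert (HK : forall Ls' : list (word Sigma -> Prop), (forall L, In L Ls' -> omega_regular L) ->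
        exists K, forall L, In L Ls' -> exists A : buchi Sigma, (nst A <= K)%nat /\ forall w, L w <-> accepts A w).
      { induction Ls' as [|L0 Ls' IH]; intros Hr.
        - exists 0%nat. intros L [].
        - destruct IH as [K IH]; [intros L HL'; apply Hr; right; exact HL'|].
          destruct (Hr L0 (or_introl eq_refl)) as [A0 HA0].
          exists (Nat.max K (nst A0)). intros L [<-|HL'].
          + exists A0. split; [lia|exact HA0].
          + destruct (IH L HL') as [A [HA1 HA2]]. exists A. split; [lia|exact HA2]. }
      destruct (HK Ls (fun L HL' => proj1 (HL L HL'))) as [K HKL].
      exists (/ 2 ^ K). split; [apply inv2_pos|].
      intros y Hd. apply HU. intros L HLin. destruct (HKL L HLin) as [A [HA HAL]].
      pose proof (delta_big Sigma x y K Hd A HA) as Hns.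
      apply HAL. apply NNPP. intros Hny. apply Hns. intros Hiff.
      apply Hny. apply Hiff. apply HAL. apply (HL L HLin).
  - intros Hc.
    assert (Hcau : cauchy (@delta Sigma) (useq Sigma a b)).
    { intros eps He. destruct (inv2_small eps He) as [K HK].
      assert (Hi : inf (fun _ => True)) by (intros n; exists n; split; [lia|exact I]).
      destruct (iph _ (fun _ => True) (fun t => @Phi Sigma K (repeat a t)) (Fin_Prof Sigma K HS) Hi)
        as [kap Hkap].
      destruct (Hkap 0%nat) as [t1 [_ [_ E1]]].
      destruct (Hkap (S t1)) as [t2 [Ht2 [_ E2]]].
      exists t2. intros m n Hm Hn.
      apply Rlt_trans with (/ 2 ^ K); [|exact HK].
      apply delta_small. intros A HA Hs. apply Hs.
      apply (useq_swap Sigma a b K A m n HA).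
      apply (period Sigma a K t1 t2); [lia|congruence|lia|lia]. }
    destruct (Hc _ Hcau) as [l Hl].
    destruct (classic (exists j, l j <> a)) as [[j Hj]|Hn].
    + destruct (Hl (/ 2 ^ (j + 2)) (inv2_pos _)) as [N0 HN0].
      set (n := Nat.max N0 (S j)).
      pose proof (delta_big Sigma _ _ _ (HN0 n ltac:(unfold n; lia)) (posA j (l j)) (le_n _)) as Hns.
      apply Hns. unfold separates. rewrite !posA_acc.
      rewrite useq_lt.
      * intros Hiff. apply Hj. symmetry. apply Hiff. reflexivity.
      * pose proof (fact_ge n). unfold n in *. lia.
    + assert (Hla : forall j, l j = a) by (intros j; apply NNPP; intros H; apply Hn; eauto).
      destruct (Hl (/ 2 ^ 2) (inv2_pos _)) as [N0 HN0].
      pose proof (delta_big Sigma _ _ _ (HN0 N0 (le_n _)) (hasB b) (le_n _)) as Hns.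
      apply Hns. unfold separates. rewrite !hasB_acc. intros Hiff.
      destruct (proj1 Hiff) as [k Hk].
      * exists (fact N0). rewrite <- (Nat.add_0_r (fact N0)). rewrite useq_tail. reflexivity.
      * rewrite Hla in Hk. congruence.
Qed.
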